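(* Let $f$ satisfy Assumption A, $g$ satisfy Assumption B, $L>L_f$, and let $(u_k)$ be a sequence of proximal gradient iterates with parameter $L$. Then $u_{k+1}(x)-u_k(x)\to0$ for almost all $x\in\Omega$.
   Context: $\Omega\subset\mathbb{R}^n$ Lebesgue measurable with finite measure. Assumption A: $f:L^2(\Omega)\to\mathbb{R}$ bounded below, weakly lower semicontinuous, Fréchet differentiable, $\nabla f$ Lipschitz with constant $L_f$. Assumption B on $g:\mathbb{R}\to\mathbb{R}\cup\{+\infty\}$: (B1) lsc, symmetric, $g(0)=0$; (B2) $g(u)<\infty$ for some $u\ne0$; (B3) one of (B3a) $g$ twice differentiable on some $(0,\epsilon)$, $\limsup_{u\searrow0}g''(u)\in(-\infty,0)$; (B3b) same differentiability, $\lim_{u\searrow0}g''(u)=-\infty$; (B3c) $\liminf_{u\searrow0}g(u)>0$; (B4) $g\ge0$. Proximal gradient iterates with parameter $L>0$: $(u_k)_{k\ge0}\subset L^2(\Omega)$, arbitrary $u_0$, each $u_{k+1}$ a global minimizer over $L^2(\Omega)$ of $f(u_k)+\int_\Omega\nabla f(u_k)(u-u_k)\,dx+\frac L2\|u-u_k\|^2_{L^2(\Omega)}+\int_\Omega g(u(x))\,dx$. *)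

(* Defs.v *)
From HB Require Import structures.
From mathcomp Require Import all_boot all_order all_algebra.
From mathcomp Require Import all_classical all_reals all_analysis.

Set Implicit Arguments.
Unset Strict Implicit.
Unset Printing Implicit Defensive.

Import Order.TTheory GRing.Theory Num.Theory.
Import numFieldNormedType.Exports.

Local Open Scope classical_set_scope.
Local Open Scope ring_scope.

Section L2.
Context {d : measure_display} {T : measurableType d} {R : realType}.
Variables (mu : {measure set T -> \bar R}) (Om : set T).

(** membership in L^2(Om) (functions are representatives of classes) *)
Definition inL2 (u : T -> R) : Prop :=
  measurable_fun Om u /\ (\int[mu]_(x in Om) ((u x) ^+ 2)%:E < +oo)%E.

Definition ipL2 (u v : T -> R) : R := \int[mu]_(x in Om) (u x * v x).
Definition normL2 (u : T -> R) : R := Num.sqrt (\int[mu]_(x in Om) (u x ^+ 2)).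

Definition L2_welldefined (f : (T -> R) -> R) : Prop :=
  forall u v, inL2 u -> inL2 v -> {ae mu, forall x, Om x -> u x = v x} ->
    f u = f v.

Definition L2_bounded_below (f : (T -> R) -> R) : Prop :=
  exists m : R, forall u, inL2 u -> m <= f u.

Definition L2_weak_cvg (uk : nat -> T -> R) (u : T -> R) : Prop :=
  forall w, inL2 w -> ipL2 (uk k) w @[k --> \oo] --> ipL2 u w.

Definition L2_weakly_lsc (f : (T -> R) -> R) : Prop :=
  forall (uk : nat -> T -> R) (u : T -> R),
    (forall k, inL2 (uk k)) -> inL2 u -> L2_weak_cvg uk u ->
    ((f u)%:E <= limn_einf (fun k => (f (uk k))%:E))%E.

Definition L2_frechet_gradient (f : (T -> R) -> R) (df : (T -> R) -> (T -> R))
  : Prop :=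
  forall u, inL2 u ->
    inL2 (df u) /\
    forall eps : R, 0 < eps -> exists2 delta : R, 0 < delta &
      forall h, inL2 h -> normL2 h < delta ->
        `| f (u \+ h) - f u - ipL2 (df u) h | <= eps * normL2 h.

Definition L2_lipschitz (F : (T -> R) -> (T -> R)) (Lf : R) : Prop :=
  forall u v, inL2 u -> inL2 v -> normL2 (F u \- F v) <= Lf * normL2 (u \- v).

Definition AssumptionA (f : (T -> R) -> R) (df : (T -> R) -> (T -> R)) (Lf : R)
  : Prop :=
  [/\ L2_welldefined f, L2_bounded_below f, L2_weakly_lsc f,
      L2_frechet_gradient f df & L2_lipschitz df Lf].

Definition prox_objective (f : (T -> R) -> R) (df : (T -> R) -> (T -> R))
  (g : R -> \bar R) (L : R) (uk u : T -> R) : \bar R :=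
  ((f uk)%:E + (ipL2 (df uk) (u \- uk))%:E
   + (L / 2 * normL2 (u \- uk) ^+ 2)%:E
   + \int[mu]_(x in Om) g (u x))%E.

Definition prox_grad_iterates (f : (T -> R) -> R) (df : (T -> R) -> (T -> R))
  (g : R -> \bar R) (L : R) (u : nat -> T -> R) : Prop :=
  (forall k, inL2 (u k)) /\
  forall k, forall v, inL2 v ->
    (prox_objective f df g L (u k) (u k.+1)
     <= prox_objective f df g L (u k) v)%E.

End L2.

Section AssumptionB.
Context {R : realType}.
Local Open Scope ereal_scope.

Definition twice_diff_near0 (g : R -> \bar R) (eps : R) : Prop :=
  (0 < eps)%R /\
  forall u : R, (0 < u < eps)%R ->
    g u \is a fin_num /\ derivable (fine \o g) u 1 /\
    derivable (derive1 (fine \o g)) u 1.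

Definition second_deriv (g : R -> \bar R) : R -> R := derive1 (derive1 (fine \o g)).

Definition AssumptionB (g : R -> \bar R) : Prop :=
  [/\ lower_semicontinuous g /\ (forall u, g (- u)%R = g u) /\ g 0%R = 0,
      (exists u : R, u != 0%R /\ g u < +oo),
      [\/ (exists eps, twice_diff_near0 g eps) /\
            -oo < limf_esup (fun u => (second_deriv g u)%:E) (0%R^'+) < 0,
          (exists eps, twice_diff_near0 g eps) /\
            second_deriv g u @[u --> 0%R^'+] --> -oo%R
        | 0 < limf_einf g (0%R^'+)]
    & forall u, 0 <= g u].

End AssumptionB.

(* Main.v *)
Require Import Defs.
From HB Require Import structures.
From mathcomp Require Import all_boot all_order all_algebra.
From mathcomp Require Import all_classical all_reals all_analysis.
From mathcomp Require Import measurable_realfun.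
From mathcomp Require Import ring lra.
Set Implicit Arguments.
Unset Strict Implicit.
Unset Printing Implicit Defensive.
Import Order.TTheory GRing.Theory Num.Theory.
Import numFieldNormedType.Exports.
Local Open Scope classical_set_scope.
Local Open Scope ring_scope.

Lemma absM_le {R : realType} (a b : R) : `|a * b| <= a ^+ 2 + b ^+ 2.
Proof.
rewrite normrM -(real_normK (num_real a)) -(real_normK (num_real b)).
have := sqr_ge0 (`|a| - `|b|).
have := normr_ge0 a; have := normr_ge0 b.
move: `|a| `|b| => x y hy hx h. nra.
Qed.

Section H.
Context {d : measure_display} {T : measurableType d} {R : realType}.
Variables (mu : {measure set T -> \bar R}) (Om : set T).
Hypothesis mOm : measurable Om.

Lemma inL2_0 : inL2 mu Om (fun _ => 0).
Proof.
split; first exact: measurable_cst.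
under eq_integral do rewrite expr0n /=.
by rewrite integral0 ltry.
Qed.

Lemma sq_int u : inL2 mu Om u -> mu.-integrable Om (EFin \o (fun x => u x ^+ 2)).
Proof.
move=> [mu1 fu]; apply/integrableP; split.
  by apply/measurable_EFinP; apply: measurable_funX.
under eq_integral do rewrite /= ger0_norm ?sqr_ge0 //.
by [].
Qed.

Lemma prod_int u v : inL2 mu Om u -> inL2 mu Om v ->
  mu.-integrable Om (EFin \o (fun x => u x * v x)).
Proof.
move=> [mu1 fu] [mv fv]; apply/integrableP; split.
  by apply/measurable_EFinP; apply: measurable_funM.
apply: (@le_lt_trans _ _ (\int[mu]_(x in Om) ((u x ^+ 2)%:E + (v x ^+ 2)%:E))%E).
  apply: ge0_le_integral => //.
  - apply/measurable_EFinP; apply: measurableT_comp => //.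
    exact: measurable_funM.
  - by apply: emeasurable_funD; apply/measurable_EFinP; apply: measurable_funX.
  by move=> x _; rewrite /= lee_fin absM_le.
rewrite ge0_integralD //; first by rewrite lte_add_pinfty.
all: try by move=> x _; rewrite lee_fin sqr_ge0.
all: by apply/measurable_EFinP; apply: measurable_funX.
Qed.

Lemma inL2_bound (w u v : T -> R) (c : R) : measurable_fun Om w -> inL2 mu Om u -> inL2 mu Om v ->
  (forall x, w x ^+ 2 <= c * (u x ^+ 2 + v x ^+ 2)) -> inL2 mu Om w.
Proof.
move=> mw iu iv hb.
have : mu.-integrable Om (EFin \o (fun x => w x ^+ 2)).
  apply: (@le_integrable _ _ _ mu Om mOm _
     (fun x => (c%:E * ((EFin \o (fun y => (u y ^+ 2)%R)) \+ (EFin \o (fun y => (v y ^+ 2)%R))) x)%E)).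
  - by apply/measurable_EFinP; apply: measurable_funX.
  - move=> x _ /=; rewrite lee_fin ger0_norm ?sqr_ge0 //.
    apply: le_trans (hb x) _; exact: ler_norm.
  - exact: (integrableZl mOm c (integrableD mOm (sq_int iu) (sq_int iv))).
move/integrableP => [_ h]; split => //.
by move: h; under eq_integral do rewrite /= ger0_norm ?sqr_ge0 //.
Qed.

Lemma inL2_lin (u v : T -> R) (t : R) : inL2 mu Om u -> inL2 mu Om v ->
  inL2 mu Om (fun x => u x + t * v x).
Proof.
move=> iu iv; apply: (@inL2_bound _ u v (2 * (1 + t ^+ 2))) => //.
  apply: measurable_funD; first by case: iu.
  by apply: measurable_funM; [exact: measurable_cst| case: iv].
move=> x; have := sqr_ge0 (u x - t * v x); have := sqr_ge0 (t * v x).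
have := sqr_ge0 (u x); have := sqr_ge0 (v x); have := sqr_ge0 t.
move: (u x) (v x) t => a b c h1 h2 h3 h4 h5; nra.
Qed.

Lemma inL2Z (v : T -> R) (t : R) : inL2 mu Om v -> inL2 mu Om (fun x => t * v x).
Proof.
move=> iv; have := inL2_lin t inL2_0 iv.
by rewrite (_ : (fun x => 0 + t * v x) = (fun x => t * v x)) // funeqE => x; rewrite add0r.
Qed.

Lemma ipL2_lin (a u v : T -> R) (t : R) : inL2 mu Om a -> inL2 mu Om u -> inL2 mu Om v ->
  ipL2 mu Om a (fun x => u x + t * v x) = ipL2 mu Om a u + t * ipL2 mu Om a v.
Proof.
move=> ia iu iv; rewrite /ipL2.
rewrite (@eq_Rintegral _ _ _ mu Om (fun x => a x * u x + t * (a x * v x))); last first.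
  by move=> x _; rewrite mulrDr mulrCA.
rewrite RintegralD //; first by rewrite RintegralZl //; exact: prod_int.
- exact: prod_int.
- have := prod_int ia (inL2Z t iv).
  by rewrite (_ : (fun x => a x * (t * v x)) = (fun x => t * (a x * v x))) // funeqE => x; rewrite mulrCA.
Qed.

Lemma real_CS (P A B : R) : 0 <= A -> 0 <= B ->
  (forall l, 0 < l -> 2 * l * P <= l ^+ 2 * A + B) -> P <= Num.sqrt A * Num.sqrt B.
Proof.
move=> A0 B0 h; rewrite -(sqr_sqrtr A0) -(sqr_sqrtr B0) in h.
have s0 := sqrtr_ge0 A; have r0 := sqrtr_ge0 B.
move: (Num.sqrt A) (Num.sqrt B) s0 r0 h => s r s0 r0 h.
rewrite leNgt; apply/negP => Pgt.
have P0 : 0 < P by apply: le_lt_trans Pgt; exact: mulr_ge0.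
have [s00|sp] := eqVneq s 0.
  subst s; have := h ((r ^+ 2 + 1) / P) (divr_gt0 (ltr_wpDl (sqr_ge0 _) ltr01) P0).
  have e : 2 * ((r ^+ 2 + 1) / P) * P = 2 * (r ^+ 2 + 1) by field; rewrite gt_eqF.
  rewrite e expr0n /= mulr0 add0r; nra.
have s1 : 0 < s by rewrite lt_def sp s0.
have := h (P / s ^+ 2) (divr_gt0 P0 (exprn_gt0 2 s1)).
have -> : (P / s ^+ 2) ^+ 2 * s ^+ 2 = P ^+ 2 / s ^+ 2.
  by field.
move=> h2.
have h3 : P ^+ 2 <= r ^+ 2 * s ^+ 2.
  have e : 2 * (P / s ^+ 2) * P - P ^+ 2 / s ^+ 2 = P ^+ 2 / s ^+ 2 by field.
  have : P ^+ 2 / s ^+ 2 <= r ^+ 2 by rewrite -e; lra.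
  by rewrite ler_pdivrMr ?exprn_gt0.
rewrite !expr2 in h3.
have := ltr_pM (mulr_ge0 s0 r0) (mulr_ge0 s0 r0) Pgt Pgt; nra.
Qed.

Lemma CS (a h : T -> R) : inL2 mu Om a -> inL2 mu Om h ->
  ipL2 mu Om a h <= normL2 mu Om a * normL2 mu Om h.
Proof.
move=> ia ih; apply: real_CS; try by apply: Rintegral_ge0 => x _; exact: sqr_ge0.
move=> l l0.
have e1 : 2 * l * ipL2 mu Om a h = \int[mu]_(x in Om) (2 * l * (a x * h x)).
  by rewrite RintegralZl //; exact: prod_int.
have e2 : l ^+ 2 * \int[mu]_(x in Om) (a x ^+ 2) + \int[mu]_(x in Om) (h x ^+ 2)
   = \int[mu]_(x in Om) (l ^+ 2 * a x ^+ 2 + h x ^+ 2).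
  rewrite RintegralD //; first by rewrite RintegralZl //; exact: sq_int.
  - have := sq_int (inL2Z l ia).
    by rewrite (_ : (fun x => (l * a x) ^+ 2) = (fun x => l ^+ 2 * a x ^+ 2)) // funeqE => x; rewrite exprMn.
  - exact: sq_int.
rewrite e1 e2; apply: le_Rintegral => //.
- have := prod_int ia (inL2Z (2 * l) ih).
  by rewrite (_ : (fun x => a x * (2 * l * h x)) = (fun x => 2 * l * (a x * h x))) // funeqE => x; rewrite mulrCA.
- apply: (@integrableD _ _ _ mu Om mOm (EFin \o (fun x => l ^+ 2 * a x ^+ 2)) (EFin \o (fun x => h x ^+ 2))).
  + have := sq_int (inL2Z l ia).
    by rewrite (_ : (fun x => (l * a x) ^+ 2) = (fun x => l ^+ 2 * a x ^+ 2)) // funeqE => x; rewrite exprMn.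
  + exact: sq_int.
- move=> x _; have := sqr_ge0 (l * a x - h x); nra.
Qed.

Lemma normL2_ge0 h : 0 <= normL2 mu Om h.
Proof. exact: sqrtr_ge0. Qed.

Lemma normL2_sq h : normL2 mu Om h ^+ 2 = \int[mu]_(x in Om) (h x ^+ 2).
Proof. by rewrite sqr_sqrtr //; apply: Rintegral_ge0 => x _; exact: sqr_ge0. Qed.

Lemma normL2Z (h : T -> R) (s : R) : inL2 mu Om h ->
  normL2 mu Om (fun x => s * h x) = `|s| * normL2 mu Om h.
Proof.
move=> ih; rewrite /normL2.
rewrite (@eq_Rintegral _ _ _ mu Om (fun x => s ^+ 2 * h x ^+ 2)); last first.
  by move=> x _; rewrite exprMn.
rewrite RintegralZl //; last exact: sq_int.
by rewrite sqrtrM ?sqr_ge0 // sqrtr_sqr.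
Qed.

Lemma ipL2Z (a h : T -> R) (s : R) : inL2 mu Om a -> inL2 mu Om h ->
  ipL2 mu Om a (fun x => s * h x) = s * ipL2 mu Om a h.
Proof.
move=> ia ih; rewrite /ipL2.
rewrite (@eq_Rintegral _ _ _ mu Om (fun x => s * (a x * h x))); last first.
  by move=> x _; rewrite mulrCA.
by rewrite RintegralZl //; exact: prod_int.
Qed.

Lemma is_derive_of_eps (F : R -> R) t D :
  (forall e, 0 < e -> exists2 del, 0 < del & forall s, s != 0 -> `|s| < del ->
     `|(F (s + t) - F t) / s - D| <= e) -> is_derive t 1 F D.
Proof.
move=> h.
have hc : (fun s : R => s^-1 *: ((F \o shift t) (s *: 1) - F t)) @ 0^' --> D.
  apply/cvgrPdist_le => e e0; have [del del0 hd] := h e e0.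
  rewrite near_withinE; apply/nbhs_ballP; exists del => // s.
  rewrite /ball /= sub0r normrN => hs sn0.
  rewrite distrC /= [s%:A]mulr1.
  have -> : s^-1 *: (F (s + t) - F t) = (F (s + t) - F t) / s by rewrite [RHS]mulrC.
  exact: hd.
by split; [apply/cvg_ex; exists D | exact: cvg_lim].
Qed.

Lemma ae_from_sum (w : nat -> T -> R) (C : R) : (forall j, inL2 mu Om (w j)) ->
  (forall N, \sum_(0 <= j < N) \int[mu]_(x in Om) (w j x ^+ 2) <= C) ->
  {ae mu, forall x, Om x -> w j x @[j --> \oo] --> 0}.
Proof.
move=> iw hC.
pose D j x := ((w j x) ^+ 2)%:E.
have D0 : forall j x, Om x -> (0 <= D j x)%E by move=> j x _; rewrite lee_fin sqr_ge0.
have mD : forall j, measurable_fun Om (D j).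
  by move=> j; apply/measurable_EFinP; apply: measurable_funX; case: (iw j).
pose h x := (\sum_(0 <= j <oo) D j x)%E.
have h0 : forall x, Om x -> (0 <= h x)%E.
  by move=> x Ox; apply: nneseries_ge0 => j _ _; exact: D0.
have mh : measurable_fun Om h.
  have := @ge0_emeasurable_sum _ _ _ Om D xpredT (fun k x Ox _ => D0 k x Ox) (fun k _ => mD k).
  by [].
have Ieq : forall j, (\int[mu]_(x in Om) D j x)%E = (\int[mu]_(x in Om) (w j x ^+ 2))%:E.
  move=> j; rewrite /Rintegral fineK //; apply: integrable_fin_num => //; exact: sq_int.
have hint : (\int[mu]_(x in Om) h x <= C%:E)%E.
  rewrite /h integral_nneseries //.
  apply: lime_le; first by apply: is_cvg_nneseries => n _ _; apply: integral_ge0 => y Oy; exact: D0.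
  near=> N.
  under eq_bigr do rewrite Ieq.
  by rewrite sumEFin lee_fin.
have hI : mu.-integrable Om h.
  apply/integrableP; split => //.
  apply: le_lt_trans (ltry C).
  under eq_integral => x /[!inE] Ox do rewrite gee0_abs ?h0 //.
  exact: hint.
apply: filterS (integrable_ae mOm hI) => x hx Ox.
have hfin := hx Ox.
pose S N := \sum_(0 <= j < N) w j x ^+ 2.
have Sle : forall N, ((S N)%:E <= h x)%E.
  move=> N; rewrite /S -sumEFin; apply: nneseries_lim_ge => n _ _; exact: D0.
have cS : cvgn (series (fun j => w j x ^+ 2)).
  apply: nondecreasing_is_cvgn.
    by apply: nondecreasing_series => n _ _; exact: sqr_ge0.
  exists (fine (h x)) => _ [N _ <-].
  by rewrite -lee_fin fineK //; exact: Sle.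
have c2 := cvg_series_cvg_0 cS.
apply/norm_cvg0P.
have -> : (fun j => `|w j x|) = (fun j => Num.sqrt (w j x ^+ 2)).
  by rewrite funeqE => j; rewrite sqrtr_sqr.
rewrite -sqrtr0.
apply: continuous_cvg; first exact: sqrt_continuous.
exact: c2.
Unshelve. all: by end_near.
Qed.

Variables (f : (T -> R) -> R) (df : (T -> R) -> (T -> R)).
Hypothesis hF : L2_frechet_gradient mu Om f df.

Lemma phi_deriv (u h0 : T -> R) : inL2 mu Om u -> inL2 mu Om h0 -> forall t : R,
  is_derive t 1 (fun t => f (fun x => u x + t * h0 x))
    (ipL2 mu Om (df (fun x => u x + t * h0 x)) h0).
Proof.
move=> iu ih t; apply: is_derive_of_eps => e e0.
set w := (fun x => u x + t * h0 x).
have iw : inL2 mu Om w := inL2_lin t iu ih.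
set n := normL2 mu Om h0.
have n0 : 0 <= n := normL2_ge0 h0.
have [idw hd0] := hF iw.
have [delta delta0 hd] := hd0 (e / (n + 1)) (divr_gt0 e0 (ltr_wpDl n0 ltr01)).
exists (delta / (n + 1)); first by rewrite divr_gt0 // ltr_wpDl.
move=> s s0 hs.
have ik : inL2 mu Om (fun x => s * h0 x) := inL2Z s ih.
have nk : normL2 mu Om (fun x => s * h0 x) = `|s| * n := normL2Z s ih.
have := hd _ ik; rewrite nk.
have -> : (w \+ (fun x => s * h0 x)) = (fun x => u x + (s + t) * h0 x).
  by rewrite funeqE => x; rewrite /w /=; ring.
rewrite ipL2Z //.
have sp : 0 < `|s| by rewrite normr_gt0.
move=> H.
have hlt : `|s| * n < delta.
  move: hs; rewrite ltr_pdivlMr ?ltr_wpDl // => hs.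
  apply: le_lt_trans hs; rewrite ler_pM2l //; lra.
have {}H := H hlt.
rewrite /=.
set N := f _ - f w in H *.
set D := ipL2 mu Om (df w) h0 in H *.
have -> : (N) / s - D = (N - s * D) / s by field.
rewrite normrM normfV ler_pdivrMr //.
apply: le_trans H _.
have q1 : e / (n + 1) * (n + 1) = e by rewrite divfK // gt_eqF // ltr_wpDl.
have q0 : 0 <= e / (n + 1) by rewrite divr_ge0 // ?ltW //; lra.
move: (e / (n + 1)) q1 q0 => q q1 q0.
have := normr_ge0 s; nra.
Qed.

Lemma is_derive_lin (c t : R) : is_derive t 1 (fun t => t * c) c.
Proof.
apply: is_derive_of_eps => e e0; exists 1 => // s s0 _.
have -> : ((s + t) * c - t * c) / s - c = 0 by field.
by rewrite normr0 ltW.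
Qed.

Lemma is_derive_sq (k t : R) : is_derive t 1 (fun t => k * t ^+ 2) (2 * k * t).
Proof.
apply: is_derive_of_eps => e e0; exists (e / (`|k| + 1)).
  by rewrite divr_gt0 // ltr_wpDl.
move=> s s0 hs.
have -> : (k * (s + t) ^+ 2 - k * t ^+ 2) / s - 2 * k * t = k * s by field.
rewrite normrM.
have hk : 0 < `|k| + 1 by rewrite ltr_wpDl.
rewrite ltr_pdivlMr // in hs.
have := normr_ge0 s; have := normr_ge0 k; nra.
Qed.

Lemma ipL2C (a b : T -> R) : ipL2 mu Om a b = ipL2 mu Om b a.
Proof. by apply: eq_Rintegral => x _; rewrite mulrC. Qed.

Variable Lf : R.
Hypothesis hL : L2_lipschitz mu Om df Lf.

Lemma descent (u h : T -> R) : inL2 mu Om u -> inL2 mu Om h ->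
  f (fun x => u x + h x) <=
  f u + ipL2 mu Om (df u) h + Lf / 2 * normL2 mu Om h ^+ 2.
Proof.
move=> iu ih.
set n := normL2 mu Om h.
set c0 := ipL2 mu Om (df u) h.
set k := Lf / 2 * n ^+ 2.
pose phi := fun t : R => f (fun x => u x + t * h x).
pose psi : R -> R := fun t => phi t - t * c0 - k * t ^+ 2.
pose dpsi := fun t : R => ipL2 mu Om (df (fun x => u x + t * h x)) h - c0 - 2 * k * t.
have hd : forall t : R, is_derive t 1 psi (dpsi t).
  move=> t.
  exact: (is_deriveB (is_deriveB (phi_deriv iu ih t) (is_derive_lin c0 t)) (is_derive_sq k t)).
have [c cI hc] : exists2 c, c \in `]0, 1[ & psi 1 - psi 0 = dpsi c * (1 - 0).
  apply: (@MVT R psi dpsi 0 1); first exact: ltr01.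
  apply: derivable_within_continuous => x xi.
  exact: (@ex_derive _ _ _ _ _ _ _ (hd x)).
have hdc : dpsi c <= 0.
  rewrite /dpsi.
  have iw : inL2 mu Om (fun x => u x + c * h x) := inL2_lin c iu ih.
  have [idw _] := hF iw.
  have [idu _] := hF iu.
  have e1 : ipL2 mu Om (df (fun x => u x + c * h x)) h - c0 =
      ipL2 mu Om h (df (fun x => u x + c * h x) \- df u).
    rewrite /c0 ipL2C (ipL2C (df u)).
    rewrite (_ : df (fun x => u x + c * h x) \- df u =
       (fun x => df (fun x => u x + c * h x) x + (-1) * df u x)); last first.
      by rewrite funeqE => x /=; rewrite mulN1r.
    by rewrite ipL2_lin // mulN1r.
  rewrite e1.
  have hcs := CS ih (inL2_lin (-1) idw idu).
  rewrite (_ : (fun x => df (fun x => u x + c * h x) x + (-1) * df u x) =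
    (df (fun x => u x + c * h x) \- df u)) in hcs; last first.
    by rewrite funeqE => x /=; rewrite mulN1r.
  have hl := hL iw iu.
  rewrite (_ : ((fun x => u x + c * h x) \- u) = (fun x => c * h x)) in hl; last first.
    by rewrite funeqE => x /=; ring.
  rewrite normL2Z // in hl.
  have cpos : 0 < c by move: cI; rewrite in_itv /= => /andP [].
  rewrite gtr0_norm // in hl.
  rewrite /k.
  have n0 : 0 <= n := normL2_ge0 h.
  have := normL2_ge0 (df (fun x => u x + c * h x) \- df u).
  move: hcs hl; rewrite -/n.
  move: (ipL2 _ _ _ _) (normL2 _ _ (_ \- _)) => P N hcs hl N0.
  nra.
have : psi 1 <= psi 0 by rewrite -subr_le0 hc subr0 mulr1.
rewrite /psi /phi /= !mul0r !mul1r expr0n expr1n /= !mulr0 !subr0 mulr1.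
rewrite (_ : (fun x => u x + 0 * h x) = u); last by rewrite funeqE => x; rewrite mul0r addr0.
rewrite (_ : (fun x => u x + 1 * h x) = (fun x => u x + h x)); last by rewrite funeqE => x; rewrite mul1r.
lra.
Qed.
End H.

Theorem corollary4p5 (d : measure_display) (T : measurableType d) (R : realType)
  (mu : {measure set T -> \bar R}) (Om : set T)
  (f : (T -> R) -> R) (df : (T -> R) -> (T -> R)) (Lf : R)
  (g : R -> \bar R) (L : R) (u : nat -> T -> R) :
  measurable Om -> (mu Om < +oo)%E ->
  AssumptionA mu Om f df Lf -> AssumptionB g ->
  0 < L -> Lf < L ->
  prox_grad_iterates mu Om f df g L u ->
  {ae mu, forall x, Om x -> (u k.+1 x - u k x) @[k --> \oo] --> 0}.
Proof.
move=> mOm finOm [_ [m hm] _ hF hL] [[_ [_ g00]] _ _ g0] L0 LfL [iu hopt].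
pose G := fun v : T -> R => (\int[mu]_(x in Om) g (v x))%E.
have G0 : forall v, (0 <= G v)%E by move=> v; apply: integral_ge0 => x _; exact: g0.
have ip0 : forall a v, ipL2 mu Om a (v \- v) = 0.
  move=> a v; rewrite /ipL2 (@eq_Rintegral _ _ _ mu Om (fun _ => 0)); last first.
    by move=> x _; rewrite /= subrr mulr0.
  by rewrite Rintegral_cst // mul0r.
have n0 : forall v, normL2 mu Om (v \- v) = 0.
  move=> v; rewrite /normL2 (@eq_Rintegral _ _ _ mu Om (fun _ => 0)); last first.
    by move=> x _; rewrite /= subrr expr0n.
  by rewrite Rintegral_cst // mul0r sqrtr0.
have Gfin : forall k, G (u k.+1) \is a fin_num.
  move=> k; have := hopt k _ (inL2_0 mu Om).
  rewrite /prox_objective.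
  have -> : (\int[mu]_(x in Om) g ((fun _ : T => 0%R) x))%E = 0%E.
    under eq_integral do rewrite /= g00.
    exact: integral0.
  rewrite adde0 -!EFinD -/(G (u k.+1)).
  have := G0 (u k.+1).
  by case: (G (u k.+1)).
pose a j := f (u j.+1).
pose Gr j := fine (G (u j.+1)).
pose dd j := u j.+2 \- u j.+1.
pose nn j := normL2 mu Om (dd j).
have idd : forall j, inL2 mu Om (dd j).
  move=> j; rewrite (_ : dd j = (fun x => u j.+2 x + (-1) * u j.+1 x)).
    exact: (inL2_lin mOm).
  by rewrite funeqE => x; rewrite /dd /= mulN1r.
have step : forall j, (L - Lf) / 2 * nn j ^+ 2 <= (a j + Gr j) - (a j.+1 + Gr j.+1).
  move=> j.
  have h1 := hopt j.+1 (u j.+1) (iu j.+1).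
  rewrite /prox_objective ip0 n0 -/(G (u j.+2)) -/(G (u j.+1)) in h1.
  rewrite -(fineK (Gfin j.+1)) -(fineK (Gfin j)) -!EFinD lee_fin in h1.
  have h2 := descent mOm hF hL (iu j.+1) (idd j).
  rewrite (_ : (fun x => u j.+1 x + dd j x) = u j.+2) in h2; last first.
    by rewrite funeqE => x; rewrite /dd /=; ring.
  rewrite expr0n /= mulr0 in h1.
  rewrite /a /Gr /nn -/(dd j).
  move: h1 h2; rewrite -/(dd j) -/(nn j).
  move: (nn j ^+ 2) (ipL2 _ _ _ _) => X I h1 h2.
  nra.
have sumb : forall N, \sum_(0 <= j < N) (L - Lf) / 2 * nn j ^+ 2 <= (a 0 + Gr 0) - (a N + Gr N).
  elim=> [|N IH]; first by rewrite big_geq // subrr.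
  rewrite big_nat_recr //=; have := step N; lra.
have lb : forall N, m <= a N + Gr N.
  move=> N; have := hm _ (iu N.+1); have : 0 <= Gr N by apply: fine_ge0.
  rewrite /a; lra.
have LL : 0 < (L - Lf) / 2 by rewrite divr_gt0 // subr_gt0.
pose C := ((a 0 + Gr 0) - m) / ((L - Lf) / 2).
have hae := @ae_from_sum _ _ _ mu Om mOm (fun j x => u j.+2 x - u j.+1 x) C idd.
have : {ae mu, forall x, Om x -> (u j.+2 x - u j.+1 x) @[j --> \oo] --> 0}.
  apply: hae => N.
  rewrite ler_pdivlMr // mulrC mulr_sumr.
  apply: (@le_trans _ _ (\sum_(0 <= j < N) (L - Lf) / 2 * nn j ^+ 2)).
    by apply: ler_sum => j _; rewrite /nn normL2_sq.
  apply: le_trans (sumb N) _; have := lb N; lra.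
apply: filterS => x hx Ox.
by rewrite -cvg_shiftS; exact: hx.
Qed.
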